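(* Let $\mathcal M^\times\subset\mathcal M^\times_{n,d,q}$ be the unique irreducible component containing the subvariety $\mathcal M^\times_{n,1,q}$ (embedded by $V_\alpha=W_\alpha=0$ for $\alpha\ge2$). Then the maps $p_x,p_z:\mathcal M^\times\to\mathrm{Mat}_{n\times n}$, $p_x(X,Z,V_\alpha,W_\alpha)=X$, $p_z(X,Z,V_\alpha,W_\alpha)=Z$, have dense image. In particular, at a generic point of $\mathcal M^\times$ both $X$ and $Z$ have simple spectrum.
   Context: Fix integers $n,d\ge1$ and $q\in\mathbb C^\times$ not a root of unity. $\mathcal M^\times_{n,d,q}$ is the affine variety of tuples $(X,Z,V_1,\dots,V_d,W_1,\dots,W_d)$ with $X,Z\in\mathrm{GL}_n(\mathbb C)$, $V_\alpha\in\mathrm{Mat}_{1\times n}$, $W_\alpha\in\mathrm{Mat}_{n\times1}$, every $\mathrm{Id}_n+W_\alpha V_\alpha$ invertible, and $XZX^{-1}Z^{-1}(\mathrm{Id}_n+W_1V_1)^{-1}\cdots(\mathrm{Id}_n+W_dV_d)^{-1}=q\,\mathrm{Id}_n$. *)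

(* Defs.v *)
From HB Require Import structures.
From mathcomp Require Import all_boot all_order all_algebra.
From mathcomp Require Import complex.
From mathcomp Require Import Rstruct.
Set Implicit Arguments. Unset Strict Implicit. Unset Printing Implicit Defensive.
Import Order.TTheory GRing.Theory Num.Theory.
Local Open Scope ring_scope.

Notation CC := (complex Rdefinitions.R).

Inductive polyfun (T I : Type) (c : I -> T -> CC) : (T -> CC) -> Prop :=
  | pf_const (a : CC) : polyfun c (fun _ => a)
  | pf_coord (i : I) : polyfun c (c i)
  | pf_add f g : polyfun c f -> polyfun c g -> polyfun c (fun x => f x + g x)
  | pf_mul f g : polyfun c f -> polyfun c g -> polyfun c (fun x => f x * g x).

Definition zclosed (T I : Type) (c : I -> T -> CC) (S : T -> Prop) : Prop :=
  exists P : (T -> CC) -> Prop,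
    (forall f, P f -> polyfun c f) /\
    (forall x, S x <-> (forall f, P f -> f x = 0)).

Definition zirreducible (T I : Type) (c : I -> T -> CC) (Y : T -> Prop) : Prop :=
  (exists x, Y x) /\
  forall S1 S2, zclosed c S1 -> zclosed c S2 ->
    (forall x, Y x -> S1 x \/ S2 x) ->
    (forall x, Y x -> S1 x) \/ (forall x, Y x -> S2 x).

Definition irred_component (T I : Type) (c : I -> T -> CC) (X Y : T -> Prop) : Prop :=
  (forall x, Y x -> X x) /\ zirreducible c Y /\
  forall Y', (forall x, Y' x -> X x) -> zirreducible c Y' ->
    (forall x, Y x -> Y' x) -> forall x, Y' x -> Y x.

Definition zdense (T I : Type) (c : I -> T -> CC) (A : T -> Prop) : Prop :=
  forall f, polyfun c f -> (forall x, A x -> f x = 0) -> forall x, f x = 0.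

(* Points of the ambient affine space: (X, Z, (V_a)_a, (W_a)_a); the index
   a : 'I_d stands for alpha = a + 1. *)
Definition pt (n d : nat) : Type :=
  ('M[CC]_n * 'M[CC]_n * ('I_d -> 'rV[CC]_n) * ('I_d -> 'cV[CC]_n))%type.

Definition ptX n d (p : pt n d) : 'M[CC]_n := p.1.1.1.
Definition ptZ n d (p : pt n d) : 'M[CC]_n := p.1.1.2.
Definition ptV n d (p : pt n d) : 'I_d -> 'rV[CC]_n := p.1.2.
Definition ptW n d (p : pt n d) : 'I_d -> 'cV[CC]_n := p.2.

Definition pt_coord n d
  (i : (('I_n * 'I_n) + ('I_n * 'I_n) + ('I_d * 'I_n) + ('I_d * 'I_n))%type)
  (p : pt n d) : CC :=
  match i with
  | inl (inl (inl (k, l))) => ptX p k l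
  | inl (inl (inr (k, l))) => ptZ p k l
  | inl (inr (a, l)) => ptV p a 0 l
  | inr (a, k) => ptW p a k 0
  end.

Definition mx_coord n (i : ('I_n * 'I_n)%type) (A : 'M[CC]_n) : CC := A i.1 i.2.

Definition Mx (n d : nat) (q : CC) (p : pt n d) : Prop :=
  ptX p \in unitmx /\ ptZ p \in unitmx /\
  (forall a, (1%:M + ptW p a *m ptV p a) \in unitmx) /\
  ptX p *m ptZ p *m invmx (ptX p) *m invmx (ptZ p) *m
    \big[mulmx/1%:M]_(a < d) invmx (1%:M + ptW p a *m ptV p a)
  = q%:M.

Definition Mx1_embedded (n d : nat) (q : CC) (p : pt n d) : Prop :=
  Mx q p /\ forall a : 'I_d, (a : nat) != 0%N -> ptV p a = 0 /\ ptW p a = 0.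

Definition simple_spectrum n (A : 'M[CC]_n) : Prop :=
  exists s : seq CC, uniq s /\ size s = n /\ all (eigenvalue A) s.

(* Main.v *)
Require Import Defs.
From HB Require Import structures.
From mathcomp Require Import all_boot all_order all_fingroup all_algebra all_field.
From mathcomp Require Import complex Rstruct ring zify.
From Stdlib Require Import FunctionalExtensionality Classical.
Import GRing.Theory Num.Theory.
Local Open Scope ring_scope.
Set Implicit Arguments. Unset Strict Implicit. Unset Printing Implicit Defensive.

Section RC.
Variables (T : Type) (R : comNzRingType) (P : (T -> R) -> Prop).
Hypothesis P0 : forall a, P (fun _ => a).
Hypothesis PD : forall f g, P f -> P g -> P (fun x => f x + g x).
Hypothesis PM : forall f g, P f -> P g -> P (fun x => f x * g x).

Lemma P_ext f g : (forall x, f x = g x) -> P f -> P g.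
Proof. by move=> H; rewrite (functional_extensionality f g H). Qed.

Lemma P_sum (J : Type) (r : seq J) (Q : pred J) (F : J -> T -> R) :
  (forall j, Q j -> P (F j)) -> P (fun x => \sum_(j <- r | Q j) F j x).
Proof.
move=> H; elim: r => [|j r IH].
  by apply: (P_ext (f := fun _ => 0)) => // x; rewrite big_nil.
case Qj: (Q j).
  apply: (P_ext (f := fun x => F j x + \sum_(j <- r | Q j) F j x)); last exact: PD (H j Qj) IH.
  by move=> x; rewrite big_cons Qj.
by apply: (P_ext _ IH) => x; rewrite big_cons Qj.
Qed.

Lemma P_prod (J : Type) (r : seq J) (Q : pred J) (F : J -> T -> R) :
  (forall j, Q j -> P (F j)) -> P (fun x => \prod_(j <- r | Q j) F j x).
Proof.
move=> H; elim: r => [|j r IH].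
  by apply: (P_ext (f := fun _ => 1)) => // x; rewrite big_nil.
case Qj: (Q j).
  apply: (P_ext (f := fun x => F j x * \prod_(j <- r | Q j) F j x)); last exact: PM (H j Qj) IH.
  by move=> x; rewrite big_cons Qj.
by apply: (P_ext _ IH) => x; rewrite big_cons Qj.
Qed.

Lemma P_opp f : P f -> P (fun x => - f x).
Proof.
move=> Hf; apply: (P_ext (f := fun x => (-1) * f x)); last exact: PM (P0 _) Hf.
by move=> x; rewrite mulN1r.
Qed.

Lemma P_det n (M : T -> 'M[R]_n) : (forall i j, P (fun x => M x i j)) ->
  P (fun x => \det (M x)).
Proof.
move=> H; apply: (P_ext (f := fun x => \sum_(s : 'S_n) (-1) ^+ s * \prod_i M x i (s i))).
  by [].
apply: P_sum => s _; apply: PM => //; exact: P_prod.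
Qed.
End RC.

Section PF.
Variables (T I : Type) (c : I -> T -> CC).
Let P0 := @pf_const T I c.
Let PD := @pf_add T I c.
Let PM := @pf_mul T I c.

Definition PPf (F : T -> {poly CC}) := forall k, polyfun c (fun x => (F x)`_k).

Lemma PP_ext F G : (forall x, F x = G x) -> PPf F -> PPf G.
Proof. by move=> H; rewrite (functional_extensionality F G H). Qed.

Lemma PP_const a : PPf (fun _ => a).
Proof. by move=> k; apply: pf_const. Qed.

Lemma PP_add F G : PPf F -> PPf G -> PPf (fun x => F x + G x).
Proof.
move=> HF HG k; apply: (P_ext (f := fun x => (F x)`_k + (G x)`_k)).
  by move=> x; rewrite coefD.
exact: PD.
Qed.

Lemma PP_mul F G : PPf F -> PPf G -> PPf (fun x => F x * G x).
Proof.
move=> HF HG k; apply: (P_ext (f := fun x => \sum_(i < k.+1) (F x)`_i * (G x)`_(k - i))).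
  by move=> x; rewrite coefM.
apply: P_sum => // i _; exact: PM.
Qed.

Lemma PP_C f : polyfun c f -> PPf (fun x => (f x)%:P).
Proof.
move=> Hf [|k].
  by apply: (P_ext _ Hf) => x; rewrite coefC.
by apply: (P_ext (f := fun _ => 0)) => [x|]; [rewrite coefC | exact: pf_const].
Qed.

Lemma PP_det n (M : T -> 'M[{poly CC}]_n) : (forall i j, PPf (fun x => M x i j)) ->
  PPf (fun x => \det (M x)).
Proof. by move=> H; apply: P_det => //; [exact: PP_const|exact: PP_add|exact: PP_mul]. Qed.

Lemma pf_det n (M : T -> 'M[CC]_n) : (forall i j, polyfun c (fun x => M x i j)) ->
  polyfun c (fun x => \det (M x)).
Proof. by move=> H; apply: P_det. Qed.

Lemma pf_opp f : polyfun c f -> polyfun c (fun x => - f x).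
Proof. by apply: P_opp. Qed.

Lemma pf_sum (J : Type) (r : seq J) (Q : pred J) (F : J -> T -> CC) :
  (forall j, Q j -> polyfun c (F j)) -> polyfun c (fun x => \sum_(j <- r | Q j) F j x).
Proof. by apply: P_sum. Qed.

Lemma pf_prod (J : Type) (r : seq J) (Q : pred J) (F : J -> T -> CC) :
  (forall j, Q j -> polyfun c (F j)) -> polyfun c (fun x => \prod_(j <- r | Q j) F j x).
Proof. by apply: P_prod. Qed.

Lemma PP_charpoly n (A : T -> 'M[CC]_n) : (forall i j, polyfun c (fun x => A x i j)) ->
  PPf (fun x => char_poly (A x)).
Proof.
move=> H; have := @PP_det n (fun x => char_poly_mx (A x)); apply => i j.
apply: (@PP_ext (fun x => ('X *+ (i == j)) + - ((A x i j)%:P))).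
  by move=> x; rewrite !mxE.
apply: PP_add; first exact: PP_const.
apply: (@PP_ext (fun x => ((- A x i j)%:P))); first by move=> x; rewrite polyCN.
by apply: PP_C; apply: pf_opp.
Qed.
End PF.

Lemma pf_entry n (i j : 'I_n) : polyfun (@mx_coord n) (fun A => A i j).
Proof. exact: (pf_coord _ (i, j)). Qed.

Lemma pf_line n (f : 'M[CC]_n -> CC) (B C : 'M[CC]_n) : polyfun (@mx_coord n) f ->
  exists p : {poly CC}, forall t, f (B + t *: C) = p.[t].
Proof.
elim => [a|[i j]|f1 f2 _ [p1 H1] _ [p2 H2]|f1 f2 _ [p1 H1] _ [p2 H2]].
- by exists a%:P => t; rewrite hornerC.
- exists ((B i j)%:P + (C i j) *: 'X) => t.
  by rewrite /mx_coord /= !mxE hornerD hornerC hornerZ hornerX mulrC.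
- by exists (p1 + p2) => t; rewrite hornerD H1 H2.
- by exists (p1 * p2) => t; rewrite hornerM H1 H2.
Qed.

Lemma pf_comp (T1 I1 T2 I2 : Type) (c1 : I1 -> T1 -> CC) (c2 : I2 -> T2 -> CC)
  (h : T2 -> T1) : (forall i, polyfun c2 (fun x => c1 i (h x))) ->
  forall f, polyfun c1 f -> polyfun c2 (fun x => f (h x)).
Proof.
move=> Hc f; elim => [a|i|f1 f2 _ H1 _ H2|f1 f2 _ H1 _ H2].
- exact: pf_const.
- exact: Hc.
- exact: pf_add.
- exact: pf_mul.
Qed.

Lemma pf_X n d f : polyfun (@mx_coord n) f -> polyfun (@pt_coord n d) (fun p => f (ptX p)).
Proof. apply: pf_comp => -[i j]; exact: (pf_coord _ (inl (inl (inl (i, j))))). Qed.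

Lemma pf_Z n d f : polyfun (@mx_coord n) f -> polyfun (@pt_coord n d) (fun p => f (ptZ p)).
Proof. apply: pf_comp => -[i j]; exact: (pf_coord _ (inl (inl (inr (i, j))))). Qed.

Lemma natCC_inj : injective (fun i : nat => (i%:R : CC)).
Proof. by move=> a b /eqP; rewrite eqr_nat => /eqP. Qed.

Lemma poly_all0 (p : {poly CC}) : (forall t, p.[t] = 0) -> p = 0.
Proof.
move=> H; apply: (@roots_geq_poly_eq0 _ p [seq i%:R | i <- iota 0 (size p)]).
- by apply/allP => x /mapP [i _ ->]; rewrite /root H.
- by rewrite map_inj_uniq ?iota_uniq //; exact: natCC_inj.
- by rewrite size_map size_iota.
Qed.

Lemma poly_eq0_gen (p Q : {poly CC}) : Q != 0 -> (forall t, Q.[t] != 0 -> p.[t] = 0) -> p = 0.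
Proof.
move=> Q0 H; have: p * Q = 0.
  apply: poly_all0 => t; rewrite hornerM.
  by have [->|/H ->] := eqVneq Q.[t] 0; rewrite ?mulr0 ?mul0r.
by move/eqP; rewrite mulf_eq0 (negPf Q0) orbF => /eqP.
Qed.

Lemma lin_neq0 (a b : CC) : b != 0 -> a%:P + b *: 'X != 0.
Proof.
move=> b0; apply/eqP => /(congr1 (fun p : {poly CC} => p`_1)).
by rewrite coefD coefC coefZ coefX /= mulr1 add0r coef0 => /eqP; rewrite (negPf b0).
Qed.

Lemma uniq_map_inj (T1 T2 : eqType) (f : T1 -> T2) (s : seq T1) :
  uniq (map f s) -> {in s &, injective f}.
Proof.
elim: s => //= a s IH /andP[Hn Hu] x y; rewrite !inE.
move=> /predU1P[->|xs] /predU1P[->|ys] //.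
- by move=> E; move: Hn; rewrite E map_f.
- by move=> E; move: Hn; rewrite -E map_f.
- exact: IH.
Qed.

Definition good n (q : CC) (x : 'rV[CC]_n) :=
  (forall i, x 0 i != 0) /\ (forall i j, x 0 i != q * x 0 j) /\
  injective (fun i => x 0 i).

Definition cauchy n (q : CC) (x : 'rV[CC]_n) : 'M[CC]_n :=
  \matrix_(i, j) (x 0 i - q * x 0 j)^-1.

Lemma size_prod_C1 n (i : 'I_n) (x : 'I_n -> CC) :
  size (\prod_(k | k != i) ('X - (x k)%:P)) = n.
Proof.
rewrite -big_filter size_prod_XsubC size_filter.
have := cardC1 i; rewrite card_ord cardE /enum_mem size_filter.
move=> ->. rewrite prednK //. by case: i => [j Hj]; apply: leq_ltn_trans Hj.
Qed.

Lemma cauchy_unit n q (x : 'rV[CC]_n) : q != 0 -> good q x -> cauchy q x \in unitmx.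
Proof.
move=> q0 [xn0 [xq xinj]].
rewrite unitmxE unitfE; apply/negP => /det0P [v v0 Hv].
pose N := \sum_i v 0 i *: \prod_(k | k != i) ('X - (x 0 k)%:P).
have sN : (size N <= n)%N.
  apply: (leq_trans (size_sum _ _ _)); apply/bigmax_leqP => i _.
  by apply: (leq_trans (size_scale_leq _ _)); rewrite size_prod_C1.
have rN : forall j, root N (q * x 0 j).
  move=> j; rewrite /root; set y := q * x 0 j.
  have yx k : y - x 0 k != 0 by rewrite subr_eq0 eq_sym xq.
  have Hj : \sum_i v 0 i * (x 0 i - y)^-1 = 0.
    transitivity ((v *m cauchy q x) 0 j); last by rewrite Hv mxE.
    by rewrite mxE; apply: eq_bigr => i _; rewrite mxE.
  rewrite horner_sum.
  have -> : \sum_i (v 0 i *: \prod_(k | k != i) ('X - (x 0 k)%:P)).[y] =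
            - (\prod_k (y - x 0 k)) * \sum_i v 0 i * (x 0 i - y)^-1.
    rewrite mulr_sumr; apply: eq_bigr => i _.
    rewrite hornerZ horner_prod [\prod_k (y - x 0 k)](bigD1 i) //=.
    have -> : \prod_(k | k != i) ('X - (x 0 k)%:P).[y] = \prod_(k | k != i) (y - x 0 k).
      by apply: eq_bigr => k _; rewrite hornerD hornerN hornerX hornerC.
    have yi := yx i; move: yi; set a := y - x 0 i => yi.
    have -> : x 0 i - y = - a by rewrite /a opprB.
    by field.
  by rewrite Hj mulr0.
have N0 : N = 0.
  apply: (@roots_geq_poly_eq0 _ N [seq q * x 0 j | j <- enum 'I_n]).
  - by apply/allP => z /mapP [j _ ->]; exact: rN.
  - rewrite map_inj_uniq ?enum_uniq // => a b /(mulfI q0); exact: xinj.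
  - by rewrite size_map size_enum_ord.
apply: (negP v0); apply/eqP/rowP => m; rewrite mxE.
have := congr1 (fun p : {poly CC} => p.[x 0 m]) N0.
rewrite horner0 horner_sum [\sum_i _](bigD1 m) //= [X in _ + X]big1 ?addr0.
  rewrite hornerZ horner_prod => /eqP; rewrite mulf_eq0 => /orP[/eqP //|].
  rewrite prodf_seq_eq0 => /hasP [k]; rewrite mem_index_enum => _ /andP[km].
  rewrite hornerD hornerN hornerX hornerC subr_eq0 => /eqP /xinj E.
  by rewrite E eqxx in km.
move=> i im; rewrite hornerZ horner_prod (bigD1 m) 1?eq_sym //=.
by rewrite hornerD hornerN hornerX hornerC subrr mul0r mulr0.
Qed.

Definition mk_point n d (X Z : 'M[CC]_n) (W : 'cV[CC]_n) (V : 'rV[CC]_n) : pt n d :=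
  (X, Z, fun a : 'I_d => if (a : nat) == 0%N then V else 0,
         fun a : 'I_d => if (a : nat) == 0%N then W else 0).

Lemma bigmulmx1 n (T : Type) (r : seq T) (F : T -> 'M[CC]_n) :
  (forall i, F i = 1%:M) -> \big[mulmx/1%:M]_(i <- r) F i = 1%:M.
Proof.
by move=> H; elim: r => [|i r IH]; rewrite ?big_nil // big_cons IH H mul1mx.
Qed.

Lemma mk_point_ok n d q (X Z : 'M[CC]_n) W V : (0 < d)%N -> q != 0 ->
  X \in unitmx -> Z \in unitmx -> X *m Z = q *: ((1%:M + W *m V) *m Z *m X) ->
  Mx1_embedded q (mk_point d X Z W V).
Proof.
case: d => // d _ q0 Xu Zu E.
set B := 1%:M + W *m V.
have HK : X *m Z *m invmx X *m invmx Z = q *: B.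
  by rewrite E -!scalemxAl mulmxK // mulmxK.
have Ku : X *m Z *m invmx X *m invmx Z \in unitmx.
  by rewrite !unitmx_mul Xu Zu !unitmx_inv Xu Zu.
have Bu : B \in unitmx.
  have -> : B = q^-1 *: (X *m Z *m invmx X *m invmx Z).
    by rewrite HK scalerA mulVf // scale1r.
  by rewrite unitmxZ // unitfE invr_eq0.
split; last first.
  by move=> a; rewrite /ptV /ptW /= => /negPf ->.
split=> //; split=> //; split.
  by move=> a; rewrite /ptV /ptW /=; case: eqP => _ //; rewrite mulmx0 addr0 unitmx1.
rewrite /ptX /ptZ /ptV /ptW /= HK.
rewrite big_ord_recl /= -/B.
have -> : \big[mulmx/1%:M]_(i < d) invmx (1%:M + (if (lift ord0 i : nat) == 0%N then W else 0) *m
      (if (lift ord0 i : nat) == 0%N then V else 0) : 'M[CC]_n) = 1%:M.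
  by apply: bigmulmx1 => i /=; rewrite mulmx0 addr0 invmx1.
by rewrite mulmx1 -scalemxAl mulmxV // scalemx1.
Qed.

Lemma ident_from n q (X Z : 'M[CC]_n) (W : 'cV_n) (U : 'rV_n) :
  Z \in unitmx -> X \in unitmx ->
  X *m Z - q *: (Z *m X) = q *: (W *m U) ->
  X *m Z = q *: ((1%:M + W *m (U *m invmx (Z *m X))) *m Z *m X).
Proof.
move=> Zu Xu E.
rewrite -mulmxA mulmxDl mul1mx (mulmxA W U) mulmxKV ?unitmx_mul ?Zu ?Xu //.
by rewrite scalerDr -E addrC subrK.
Qed.

Lemma ident_conj n q (X Z : 'M[CC]_n) (W : 'cV_n) (V : 'rV_n) (g : 'M[CC]_n) :
  g \in unitmx ->
  X *m Z = q *: ((1%:M + W *m V) *m Z *m X) ->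
  (g *m X *m invmx g) *m (g *m Z *m invmx g) =
  q *: ((1%:M + (g *m W) *m (V *m invmx g)) *m (g *m Z *m invmx g) *m (g *m X *m invmx g)).
Proof.
move=> gu E.
have -> : 1%:M + g *m W *m (V *m invmx g) = g *m (1%:M + W *m V) *m invmx g.
  by rewrite mulmxDr mulmxDl mulmx1 mulmxV // !mulmxA.
rewrite !mulmxA !mulmxKV //.
by rewrite -(mulmxA g X Z) E -scalemxAr -scalemxAl !mulmxA.
Qed.

Lemma diag_unit n (x : 'rV[CC]_n) : (forall i, x 0 i != 0) -> diag_mx x \in unitmx.
Proof.
move=> H; rewrite unitmxE det_diag unitfE; apply/prodf_neq0 => i _; exact: H.
Qed.

Lemma good_X n d q (x : 'rV[CC]_n) (G : 'M[CC]_n) : (0 < d)%N -> q != 0 ->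
  good q x -> G \in unitmx ->
  exists p : pt n d, Mx1_embedded q p /\ ptX p = invmx G *m diag_mx x *m G.
Proof.
move=> d0 q0 gx Gu; have [xn0 [xq xinj]] := gx.
set X := diag_mx x.
set Z := q *: (cauchy q x *m diag_mx x).
have Xu : X \in unitmx by exact: diag_unit.
have Zu : Z \in unitmx.
  by rewrite unitmxZ ?unitfE // unitmx_mul cauchy_unit // diag_unit.
have E := ident_from (W := const_mx 1) (U := x) Zu Xu.
have E' : X *m Z - q *: (Z *m X) = q *: (const_mx 1 *m x).
  rewrite /X /Z -scalemxAr -scalemxAl mul_diag_mx !mul_mx_diag.
  apply/matrixP => i j; rewrite !mxE.
  rewrite big_ord1 !mxE mul1r.
  have dij : x 0 i - q * x 0 j != 0 by rewrite subr_eq0 xq.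
  by field.
have gu : invmx G \in unitmx by rewrite unitmx_inv.
have E2 := ident_conj gu (E q E').
exists (mk_point d (invmx G *m X *m invmx (invmx G)) (invmx G *m Z *m invmx (invmx G))
   (invmx G *m const_mx 1) (x *m invmx (Z *m X) *m invmx (invmx G))).
split; last by rewrite /ptX /= invmxK.
apply: mk_point_ok => //; rewrite ?unitmx_mul ?unitmx_inv ?Xu ?Zu ?Gu //.
Qed.

Lemma good_Z n d q (x : 'rV[CC]_n) (G : 'M[CC]_n) : (0 < d)%N -> q != 0 ->
  good q x -> G \in unitmx ->
  exists p : pt n d, Mx1_embedded q p /\ ptZ p = invmx G *m diag_mx x *m G.
Proof.
move=> d0 q0 gx Gu; have [xn0 [xq xinj]] := gx.
set Z := diag_mx x.
set X := q *: (cauchy q x)^T.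
have Zu : Z \in unitmx by exact: diag_unit.
have Xu : X \in unitmx.
  by rewrite unitmxZ ?unitfE // unitmx_tr cauchy_unit.
have E := ident_from (W := const_mx 1) (U := const_mx 1) Zu Xu.
have E' : X *m Z - q *: (Z *m X) = q *: ((const_mx 1 : 'cV[CC]_n) *m (const_mx 1 : 'rV[CC]_n)).
  rewrite /X /Z -scalemxAl -scalemxAr mul_mx_diag mul_diag_mx.
    apply/matrixP => i j; rewrite !mxE.
  rewrite big_ord1 !mxE mul1r.
  have dij : x 0 j - q * x 0 i != 0 by rewrite subr_eq0 xq.
  by field.
have gu : invmx G \in unitmx by rewrite unitmx_inv.
have E2 := ident_conj gu (E q E').
exists (mk_point d (invmx G *m X *m invmx (invmx G)) (invmx G *m Z *m invmx (invmx G))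
   (invmx G *m const_mx 1) (const_mx 1 *m invmx (Z *m X) *m invmx (invmx G))).
split; last by rewrite /ptZ /= invmxK.
apply: mk_point_ok => //; rewrite ?unitmx_mul ?unitmx_inv ?Xu ?Zu ?Gu //.
Qed.

Lemma qpow_inj (q : CC) : q != 0 -> (forall k : nat, (0 < k)%N -> q ^+ k != 1) ->
  forall a b, q ^+ a = q ^+ b -> a = b.
Proof.
move=> q0 Hq.
suff H : forall a b, (a <= b)%N -> q ^+ a = q ^+ b -> a = b.
  move=> a b; case: (leqP a b) => [|/ltnW] ab E; first exact: H.
  by apply/esym/H.
move=> a b ab E; apply/eqP; rewrite eqn_leq ab /= leqNgt; apply/negP => ba.
have : q ^+ (b - a) == 1.
  have E2 : 1 * q ^+ a = q ^+ (b - a) * q ^+ a by rewrite mul1r -exprD subnK.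
  by have := mulIf (expf_neq0 a q0) E2 => <-.
have Hk : (0 < b - a)%N by rewrite subn_gt0.
by move=> H; move: (Hq _ Hk); rewrite H.
Qed.

Lemma char_poly_conj n (A G : 'M[CC]_n) : G \in unitmx ->
  char_poly (invmx G *m A *m G) = char_poly A.
Proof.
move=> Gu; rewrite /char_poly.
have -> : char_poly_mx (invmx G *m A *m G) =
   map_mx polyC (invmx G) *m char_poly_mx A *m map_mx polyC G.
  rewrite /char_poly_mx !map_mxM mulmxBr mulmxBl ?mulmxA.
  congr (_ - _); rewrite scalar_mxC -mulmxA -map_mxM mulVmx // map_mx1 mulmx1.
  by [].
rewrite !det_mulmx !det_map_mx mulrC mulrA -rmorphM -det_mulmx mulmxV //.
by rewrite det1 mul1r.
Qed.

Lemma cp_trig_seq n (T : 'M[CC]_n) : is_trig_mx T ->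
  char_poly T = \prod_(y <- [seq T i i | i <- enum 'I_n]) ('X - y%:P).
Proof. by move=> tT; rewrite char_poly_trig // big_map big_enum. Qed.

Lemma trig_good n' q (T : 'M[CC]_n'.+1) : is_trig_mx T -> good q (\row_i T i i) ->
  exists x G, good q x /\ G \in unitmx /\ T = invmx G *m diag_mx x *m G.
Proof.
move=> tT [gn0 [gq ginj]].
set rs := [seq T i i | i <- enum 'I_n'.+1].
have cpT := cp_trig_seq tT; rewrite -/rs in cpT.
have urs : uniq rs.
  rewrite map_inj_uniq ?enum_uniq // => i j E; apply: ginj; by rewrite /= !mxE.
have [P Pu HP] : exists2 P : 'M_n'.+1, P \in unitmx & similar_diag P T.
  by apply/diagonalizableP; exists rs => //; rewrite -cpT mxminpoly_dvd_char.
have [D HD] := similar_diagLR Pu HP.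
rewrite conjumx ?unitmx_inv // invmxK in HD.
exists D, P; split; last by split.
set rD := [seq D 0 i | i <- enum 'I_n'.+1].
have cpD : char_poly (diag_mx D) = \prod_(y <- rD) ('X - y%:P).
  rewrite cp_trig_seq ?diag_mx_is_trig //; congr (\prod_(y <- _) _).
  by apply: eq_map => i; rewrite mxE eqxx mulr1n.
have cpE : char_poly T = char_poly (diag_mx D) by rewrite HD char_poly_conj.
have mem k : D 0 k \in rs.
  rewrite -root_prod_XsubC -cpT cpE cpD root_prod_XsubC.
  by apply: map_f; rewrite mem_enum.
split; last split.
- move=> k; have /mapP [i _ ->] := mem k; have := gn0 i; by rewrite mxE.
- move=> k l; have /mapP [i _ ->] := mem k; have /mapP [j _ ->] := mem l.
  by have := gq i j; rewrite !mxE.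
- have urD : uniq rD.
    by rewrite -separable_prod_XsubC -cpD -cpE cpT separable_prod_XsubC.
  move=> k l E; apply: (uniq_map_inj urD); rewrite ?mem_enum //.
Qed.

Lemma invmxM' n (A B : 'M[CC]_n) : A \in unitmx -> B \in unitmx ->
  invmx (A *m B) = invmx B *m invmx A.
Proof.
move=> Au Bu; have ABu : A *m B \in unitmx by rewrite unitmx_mul Au Bu.
have -> : invmx B *m invmx A = invmx B *m invmx A *m (A *m B) *m invmx (A *m B).
  by rewrite mulmxK.
by rewrite !mulmxA mulmxKV // mulVmx // mul1mx.
Qed.

Definition lin (a b : CC) : {poly CC} := a%:P + b *: 'X.

Lemma lin_horner a b t : (lin a b).[t] = a + b * t.
Proof. by rewrite /lin hornerD hornerC hornerZ hornerX. Qed.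

Lemma density n' q (Img : 'M[CC]_n'.+1 -> Prop) : q != 0 ->
  (forall k : nat, (0 < k)%N -> q ^+ k != 1) ->
  (forall x G, good q x -> G \in unitmx -> Img (invmx G *m diag_mx x *m G)) ->
  forall f, polyfun (@mx_coord n'.+1) f -> (forall A, Img A -> f A = 0) ->
  forall A, f A = 0.
Proof.
move=> q0 Hq HI f Hf Hf0 A.
have [P Pu0 /allP HP] := @cotrigonalization CC _ [:: A]
  (fun B C => ltac:(by rewrite !inE => /eqP-> /eqP->)).
have Pu : P \in unitmx := unitarymx_unit Pu0.
have tT := HP A (mem_head _ _); rewrite /= /similar_to /= conjumx // in tT.
set T := P *m A *m invmx P in tT.
have AT : A = invmx P *m T *m P by rewrite /T !mulmxA mulVmx // mul1mx mulmxKV.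
pose c := fun i : 'I_n'.+1 => q ^+ (2 * i + 2).
pose E := diag_mx (\row_i c i).
have [p Hp] := pf_line A (invmx P *m E *m P) Hf.
have cn0 i : c i != 0 by rewrite expf_neq0.
have cinj i j : c i = c j -> i = j.
  by move=> /(qpow_inj q0 Hq) H; apply/val_inj => /=; lia.
have cq i j : c i != q * c j.
  by apply/eqP; rewrite /c -exprS => /(qpow_inj q0 Hq) H; lia.
pose Q := \prod_i lin (T i i) (c i) *
          \prod_i \prod_(j | j != i) lin (T i i - T j j) (c i - c j) *
          \prod_i \prod_j lin (T i i - q * T j j) (c i - q * c j).
have Q0 : Q != 0.
  rewrite !mulf_neq0 //; apply/prodf_neq0 => i _; rewrite ?lin_neq0 //;
    try (apply/prodf_neq0 => j ji; rewrite lin_neq0 //).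
  - by rewrite subr_eq0; apply/eqP => /cinj E1; rewrite E1 eqxx in ji.
  - by rewrite subr_eq0.
have p0 : p = 0.
  apply: (poly_eq0_gen Q0) => t.
  rewrite /Q !hornerM !horner_prod !mulf_eq0 !negb_or.
  move=> /andP[/andP[/prodf_neq0 H1 /prodf_neq0 H2] /prodf_neq0 H3].
  set T' := T + t *: E.
  have T'E i : T' i i = T i i + c i * t by rewrite !mxE eqxx mulr1n mulrC.
  have tT' : is_trig_mx T'.
    have /is_trig_mxP tT0 := tT.
    apply/is_trig_mxP => i j ij; rewrite /T' [LHS]mxE tT0 // add0r !mxE.
    by rewrite (_ : (i == j) = false) ?mulr0n ?mulr0 //; apply/negbTE; rewrite neq_ltn ij.
  have RE i : (\row_k T' k k) 0 i = T i i + c i * t by rewrite [LHS]mxE T'E.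
  have gT' : good q (\row_i T' i i).
    split; last split.
    - by move=> i; rewrite RE -lin_horner; exact: H1.
    - move=> i j; rewrite !RE.
      have := H3 i isT; rewrite horner_prod => /prodf_neq0 /(_ j isT).
      rewrite lin_horner; apply: contraNneq => Eq; apply/eqP.
      have Z0 : T i i + c i * t - q * (T j j + c j * t) = 0 by rewrite Eq subrr.
      by rewrite -Z0; ring.
    - move=> i j /=; rewrite !RE => Eij; apply/eqP; apply/negPn/negP => ij.
      have := H2 i isT; rewrite horner_prod => /prodf_neq0 /(_ j).
      rewrite eq_sym ij lin_horner => /(_ isT) /eqP; apply.
      have Z0 : T i i + c i * t - (T j j + c j * t) = 0 by rewrite Eij subrr.
      by rewrite -Z0; ring.
  have [x [G [gx [Gu ET]]]] := trig_good tT' gT'.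
  rewrite -Hp; apply: Hf0.
  have -> : A + t *: (invmx P *m E *m P) = invmx (G *m P) *m diag_mx x *m (G *m P).
    rewrite invmxM' //.
    have -> : invmx P *m invmx G *m diag_mx x *m (G *m P) =
              invmx P *m (invmx G *m diag_mx x *m G) *m P by rewrite !mulmxA.
    by rewrite -ET /T' mulmxDr mulmxDl -AT -scalemxAr -scalemxAl.
  by apply: HI => //; rewrite unitmx_mul Gu Pu.
by rewrite -[A]addr0 -(scale0r (invmx P *m E *m P)) Hp p0 horner0.
Qed.

Definition Syl (a b : nat) (p q : {poly CC}) : 'M[CC]_(b.-1 + a.-1) :=
  \matrix_(i, j) match split i with
                 | inl k => p`_(j - k) *+ (k <= j)
                 | inr k => q`_(j - k) *+ (k <= j) end.

Lemma resultant_Syl (p q : {poly CC}) a b : size p = a -> size q = b ->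
  resultant p q = \det (Syl a b p q).
Proof.
move=> <- <-; rewrite /resultant; congr (\det _); apply/matrixP => i j.
by rewrite Sylvester_mxE mxE.
Qed.

Lemma size_deriv_cp n (A : 'M[CC]_n) : size (char_poly A)^`() = n.
Proof.
have cp0 : char_poly A != 0 by rewrite monic_neq0 // char_poly_monic.
have lt := lt_size_deriv cp0; rewrite size_char_poly ltnS in lt.
case: n A cp0 lt => [|m] A cp0 lt; first by apply/eqP; rewrite -leqn0.
apply/eqP; rewrite eqn_leq lt /= ltnNge; apply/negP => H.
have := nth_default 0 H; rewrite coef_deriv.
have -> : (char_poly A)`_m.+1 = 1.
  by have := monicP (char_poly_monic A); rewrite /lead_coef size_char_poly.
by move/eqP; rewrite pnatr_eq0.
Qed.

Definition Dsc n (A : 'M[CC]_n) : CC :=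
  \det (Syl n.+1 n (char_poly A) (char_poly A)^`()).

Lemma Dsc_res n (A : 'M[CC]_n) : Dsc A = resultant (char_poly A) (char_poly A)^`().
Proof. by rewrite (resultant_Syl (size_char_poly A) (size_deriv_cp A)). Qed.

Lemma pf_mulrn T I (c : I -> T -> CC) f k : polyfun c f -> polyfun c (fun x => f x *+ k).
Proof.
move=> Hf; apply: (P_ext (f := fun x => f x * k%:R)).
  by move=> x; rewrite mulr_natr.
by apply: pf_mul => //; apply: pf_const.
Qed.

Lemma pf_Dsc n : polyfun (@mx_coord n) (@Dsc n).
Proof.
have Hc : PPf (@mx_coord n) (fun A => char_poly A).
  by apply: PP_charpoly => i j; exact: pf_entry.
apply: (P_ext (f := fun A => \det (Syl n.+1 n (char_poly A) (char_poly A)^`()))) => //.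
apply: pf_det => i j; rewrite /Syl.
apply: (P_ext (f := fun A => match split i with
                 | inl k => (char_poly A)`_(j - k) *+ (k <= j)
                 | inr k => ((char_poly A)^`())`_(j - k) *+ (k <= j) end)).
  by move=> A; rewrite mxE.
case: (split i) => k; apply: pf_mulrn => //.
apply: (P_ext (f := fun A => (char_poly A)`_(j - k).+1 *+ (j - k).+1)).
  by move=> A; rewrite coef_deriv.
exact: pf_mulrn.
Qed.

Lemma Dsc_simple n (A : 'M[CC]_n) : Dsc A != 0 -> simple_spectrum A.
Proof.
rewrite Dsc_res resultant_eq0 -leqNgt => Hg.
have cp0 : char_poly A != 0 by rewrite monic_neq0 // char_poly_monic.
have cop : coprimep (char_poly A) (char_poly A)^`().
  rewrite coprimep_def eqn_leq Hg /= size_poly_gt0 gcdp_eq0 negb_and cp0 //.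
have sep : separable_poly (char_poly A) by rewrite unlock.
have [r Hr] := closed_field_poly_normal (char_poly A).
move: Hr; rewrite (monicP (char_poly_monic A)) scale1r => Hr.
exists r; split; last split.
- by rewrite -separable_prod_XsubC -Hr.
- by have := size_char_poly A; rewrite Hr size_prod_XsubC => -[].
- by apply/allP => a ar; rewrite eigenvalue_root_char Hr root_prod_XsubC.
Qed.

Lemma Dsc_diag n : Dsc (diag_mx (\row_i ((i : nat)%:R : CC)) : 'M[CC]_n) != 0.
Proof.
rewrite Dsc_res resultant_eq0 -leqNgt.
set p := char_poly _.
have cop : coprimep p p^`().
  have : separable_poly p.
    rewrite /p cp_trig_seq ?diag_mx_is_trig // separable_prod_XsubC.
    rewrite map_inj_uniq ?enum_uniq // => i j; rewrite !mxE !eqxx !mulr1n.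
    by move=> E; apply/val_inj; exact: (natCC_inj E).
  by rewrite unlock.
by move: cop; rewrite coprimep_def => /eqP ->.
Qed.

Unset Implicit Arguments.

Theorem mainTheorem7 (n d : nat) (q : CC) :
  (1 <= n)%N -> (1 <= d)%N -> q != 0 ->
  (forall k : nat, (0 < k)%N -> q ^+ k != 1) ->
  forall M : pt n d -> Prop,
    irred_component (@pt_coord n d) (Mx q) M ->
    (forall p, Mx1_embedded q p -> M p) ->
    zdense (@mx_coord n) (fun A => exists p, M p /\ ptX p = A) /\
    zdense (@mx_coord n) (fun A => exists p, M p /\ ptZ p = A) /\
    (exists S : pt n d -> Prop,
       zclosed (@pt_coord n d) S /\ (exists p, M p /\ ~ S p) /\
       forall p, M p -> ~ S p -> simple_spectrum (ptX p) /\ simple_spectrum (ptZ p)).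
Proof.
case: n => // n _ d0 q0 Hq M [_ [Mirr _]] HM1.
have dX : zdense (@mx_coord n.+1) (fun A => exists p, M p /\ ptX p = A).
  move=> f Hf Hf0 A; apply: (density q0 Hq _ Hf Hf0) => x G gx Gu.
  have [p [Hp HX]] := good_X d0 q0 gx Gu.
  by exists p; split; [apply: HM1|].
have dZ : zdense (@mx_coord n.+1) (fun A => exists p, M p /\ ptZ p = A).
  move=> f Hf Hf0 A; apply: (density q0 Hq _ Hf Hf0) => x G gx Gu.
  have [p [Hp HX]] := good_Z d0 q0 gx Gu.
  by exists p; split; [apply: HM1|].
have zc : forall g : pt n.+1 d -> CC, polyfun (@pt_coord n.+1 d) g ->
    zclosed (@pt_coord n.+1 d) (fun p => g p = 0).
  move=> g Hg; exists (fun f => f = g); split; first by move=> f ->.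
  by move=> x; split => [H f -> //|H]; apply: H.
have pX := pf_X d (@pf_Dsc n.+1).
have pZ := pf_Z d (@pf_Dsc n.+1).
split=> //; split=> //.
exists (fun p => Dsc (ptX p) * Dsc (ptZ p) = 0); split.
  by apply: zc; apply: pf_mul.
split.
  apply: NNPP => Hne.
  have Hall : forall p, M p -> Dsc (ptX p) = 0 \/ Dsc (ptZ p) = 0.
    move=> p Mp; apply: NNPP => Hn; apply: Hne; exists p; split=> // /eqP.
    by rewrite mulf_eq0 => /orP[/eqP ?|/eqP ?]; apply: Hn; [left|right].
  have [H|H] := Mirr.2 _ _ (zc _ pX) (zc _ pZ) Hall.
  - apply: (elimN eqP (@Dsc_diag n.+1)).
    have Hv : forall A : 'M[CC]_n.+1, (exists p, M p /\ ptX p = A) -> Dsc A = 0.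
      by move=> A [p [Mp <-]]; apply: H.
    exact: (dX _ (@pf_Dsc n.+1) Hv _).
  - apply: (elimN eqP (@Dsc_diag n.+1)).
    have Hv : forall A : 'M[CC]_n.+1, (exists p, M p /\ ptZ p = A) -> Dsc A = 0.
      by move=> A [p [Mp <-]]; apply: H.
    exact: (dZ _ (@pf_Dsc n.+1) Hv _).
move=> p Mp HS.
have H1 : Dsc (ptX p) != 0 by apply/eqP => E; apply: HS; rewrite E mul0r.
have H2 : Dsc (ptZ p) != 0 by apply/eqP => E; apply: HS; rewrite E mulr0.
by split; [exact: (Dsc_simple H1) | exact: (Dsc_simple H2)].
Qed.
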